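(* Let $q$ be a prime, let $d=\pi(q-1)$, let $p_1<\dots<p_d$ be the primes less than $q$, and for $n\in\{1,\dots,q-1\}$ with $n=\prod_{i=1}^d p_i^{\mu_i(n)}$ define the linear form $\mathscr{L}_n:\mathbb{F}_q^d\to\mathbb{F}_q$, $\mathscr{L}_n(\mathbf{v})=\sum_{i=1}^d\mu_i(n)v_i$. Let $k\in\mathbb{N}$. (a) If $n_1,\dots,n_k\in\{1,\dots,q-1\}$ are multiplicatively dependent, then $\mathscr{L}_{n_1},\dots,\mathscr{L}_{n_k}$ are $\mathbb{F}_q$-dependent. (b) Suppose $k<\frac{\log q}{10\log_2 q}$. Then $n_1,\dots,n_k\in\{2,3,\dots,q-1\}$ are multiplicatively independent if and only if $\mathscr{L}_{n_1},\dots,\mathscr{L}_{n_k}$ are $\mathbb{F}_q$-independent.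
   Context: Integers $n_1,\dots,n_r$ are multiplicatively independent if $\alpha_1=\dots=\alpha_r=0$ is the only integer solution of $n_1^{\alpha_1}\cdots n_r^{\alpha_r}=1$, and multiplicatively dependent otherwise. Forms $\mathscr{L}_{n_1},\dots,\mathscr{L}_{n_k}$ are $\mathbb{F}_q$-independent if $\alpha_1\mathscr{L}_{n_1}+\dots+\alpha_k\mathscr{L}_{n_k}=0$ (as a function on $\mathbb{F}_q^d$) with $\alpha_i\in\mathbb{F}_q$ forces all $\alpha_i=0$, and $\mathbb{F}_q$-dependent otherwise. $\log x:=\max\{\ln x,2\}$, $\log_2 x=\log\log x$; $\pi(x)$ is the number of primes $\le x$. *)

(* Defs.v *)
From HB Require Import structures.
From mathcomp Require Import all_boot all_order all_algebra.
From Stdlib Require Reals.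
Set Implicit Arguments. Unset Strict Implicit. Unset Printing Implicit Defensive.
Import Order.TTheory GRing.Theory Num.Theory.

Definition primes_lt (q : nat) : seq nat := filter prime (iota 0 q).
Definition dq (q : nat) : nat := size (primes_lt q).
(* p_(i+1) for i : 'I_d (0-based index) *)
Definition pr (q : nat) (i : nat) : nat := nth 0 (primes_lt q) i.

Local Open Scope ring_scope.

Definition Lform (q n : nat) (v : 'rV['F_q]_(dq q)) : 'F_q :=
  \sum_(i < dq q) (logn (pr q i) n)%:R * v ord0 i.

Definition Fq_dep (q k : nat) (n : 'I_k -> nat) : Prop :=
  exists a : 'I_k -> 'F_q, (exists j, a j != 0) /\
    forall v : 'rV['F_q]_(dq q), \sum_(j < k) a j * Lform (n j) v = 0.
Definition Fq_indep (q k : nat) (n : 'I_k -> nat) : Prop := ~ Fq_dep q n.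

Definition mult_dep (k : nat) (n : 'I_k -> nat) : Prop :=
  exists a : 'I_k -> int, (exists j, a j != 0) /\
    \prod_(j < k) ((n j)%:Q ^ a j) = 1.
Definition mult_indep (k : nat) (n : 'I_k -> nat) : Prop := ~ mult_dep n.

Local Close Scope ring_scope.

Section RealPart.
Import Reals.
Local Open Scope R_scope.
Definition Log (x : R) : R := Rmax (ln x) 2.
Definition Log2 (x : R) : R := Log (Log x).
Definition small_k (k q : nat) : Prop :=
  INR k < Log (INR q) / (10 * Log2 (INR q)).
End RealPart.

(* Main.v *)
Require Import Defs.
From mathcomp Require Import all_boot all_order all_algebra all_fingroup.
From Stdlib Require Reals Lra.
Set Implicit Arguments. Unset Strict Implicit. Unset Printing Implicit Defensive.
Import Order.TTheory GRing.Theory Num.Theory.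

Lemma pr_mem q (i : nat) : i < dq q -> pr q i \in primes_lt q.
Proof. by move=> h; rewrite /pr mem_nth. Qed.

Lemma pr_prime q (i : nat) : i < dq q -> prime (pr q i) /\ pr q i < q.
Proof.
move/pr_mem; rewrite mem_filter mem_iota add0n => /andP[-> /andP[_ ->]]; done.
Qed.

Lemma uniq_primes_lt q : uniq (primes_lt q).
Proof. by rewrite filter_uniq // iota_uniq. Qed.

Lemma pr_index q p : prime p -> p < q -> exists2 i, i < dq q & pr q i = p.
Proof.
move=> pp pq; have hm : p \in primes_lt q by rewrite mem_filter pp mem_iota.
exists (index p (primes_lt q)); first by rewrite /dq index_mem.
by rewrite /pr nth_index.
Qed.

Lemma prod_pr_le q n : 0 < n -> n < q ->
  \prod_(i < dq q) pr q i ^ logn (pr q i) n <= n.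
Proof.
move=> n0 nq.
rewrite -(big_mkord xpredT (fun i => pr q i ^ logn (pr q i) n)).
rewrite /pr /dq -(big_nth 0 xpredT (fun p => p ^ logn p n)).
rewrite /primes_lt big_filter.
rewrite [X in X <= _](_ : _ = \prod_(0 <= p < q) p ^ logn p n).
  rewrite (big_cat_nat (n:=n.+1) (leq0n _) nq) /=.
  rewrite [X in _ * X]big1_seq ?muln1.
    by rewrite -/(partn n predT) partnT.
  move=> p /andP[_]; rewrite mem_index_iota => /andP[hp _].
  suff -> : logn p n = 0 by [].
  apply/eqP; rewrite -leqn0 leqNgt logn_gt0 mem_primes.
  apply/negP => /and3P[_ _ /(dvdn_leq n0)] /(leq_trans hp).
  by rewrite ltnn.
rewrite /index_iota subn0 big_mkcond /=; apply: eq_bigr => p _.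
by case: ifP => // np; rewrite lognE np.
Qed.

Lemma Omega_le q n : 0 < n -> n < q ->
  2 ^ (\sum_(i < dq q) logn (pr q i) n) <= n.
Proof.
move=> n0 nq; apply: leq_trans (prod_pr_le n0 nq).
rewrite expn_sum; apply: leq_prod => i _.
case: (pr_prime (ltn_ord i)) => /prime_gt1 h2 _.
case: (logn _ _) => [|e] //; by rewrite leq_exp2r.
Qed.
Lemma logn_prod p (I : finType) (F : I -> nat) : (forall i, 0 < F i) ->
  logn p (\prod_i F i) = \sum_i logn p (F i).
Proof.
move=> hF.
suff: (0 < \prod_i F i) && (logn p (\prod_i F i) == \sum_i logn p (F i)).
  by case/andP=> _ /eqP.
apply: (big_ind2 (fun a b => (0 < a) && (logn p a == b))).
- by rewrite (logn1 p).
- intros a1 b1 a2 b2 H1 H2. case/andP: H1 => h1 e1. case/andP: H2 => h2 e2.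
  by rewrite muln_gt0 h1 h2 lognM // (eqP e1) (eqP e2) eqxx.
- by move=> i _; rewrite hF eqxx.
Qed.

Definition posp (z : int) : nat := if z is Posz m then m else 0.
Definition negp (z : int) : nat := if z is Negz m then m.+1 else 0.

Local Open Scope ring_scope.

Lemma posnegE (z : int) : z = (posp z)%:Z - (negp z)%:Z.
Proof. by case: z => [m|m] //=; rewrite ?subr0 // NegzE sub0r. Qed.

Lemma exprz_posneg (x : rat) (z : int) : x ^ z = x ^+ posp z / x ^+ negp z.
Proof. by case: z => [m|m] /=; rewrite ?expr0 ?invr1 ?mulr1 ?mul1r. Qed.

Lemma prodQ_eq1 k (n : 'I_k -> nat) (a : 'I_k -> int) : (forall j, (0 < n j)%N) ->
  (\prod_j ((n j)%:Q ^ a j) = 1) <->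
  (forall p, prime p -> \sum_j a j * (logn p (n j))%:Z = 0).
Proof.
move=> hn.
pose P := (\prod_j n j ^ posp (a j))%N.
pose N := (\prod_j n j ^ negp (a j))%N.
have hP : (0 < P)%N by rewrite prodn_gt0 // => j; rewrite expn_gt0 hn.
have hN : (0 < N)%N by rewrite prodn_gt0 // => j; rewrite expn_gt0 hn.
have E : \prod_j ((n j)%:Q ^ a j) = P%:R / N%:R.
  rewrite /P /N !natr_prod -prodf_div; apply: eq_bigr => j _.
  by rewrite exprz_posneg !natrX.
have LP p : logn p P = (\sum_j posp (a j) * logn p (n j))%N.
  rewrite /P logn_prod => [|j]; last by rewrite expn_gt0 hn.
  by apply: eq_bigr => j _; rewrite lognX.
have LN p : logn p N = (\sum_j negp (a j) * logn p (n j))%N.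
  rewrite /N logn_prod => [|j]; last by rewrite expn_gt0 hn.
  by apply: eq_bigr => j _; rewrite lognX.
have S p : \sum_j a j * (logn p (n j))%:Z = (logn p P)%:Z - (logn p N)%:Z.
  rewrite LP LN !(big_morph Posz PoszD (erefl _)) -sumrB; apply: eq_bigr => j _.
  by rewrite {1}(posnegE (a j)) mulrBl !PoszM.
clearbody P N; rewrite E; split.
- move=> h p _; rewrite S; apply/eqP; rewrite subr_eq0 eqz_nat.
  have -> : P = N.
    have hN' : N%:R != 0 :> rat by rewrite pnatr_eq0 -lt0n.
    apply/eqP; rewrite -(eqr_nat rat); apply/eqP.
    by rewrite -(divfK hN' P%:R) h mul1r.
  by rewrite eqxx.
- move=> h; have -> : P = N.
    apply: eqn_from_log => // p.
    case: (boolP (prime p)) => pp; last by rewrite lognE (negPf pp) [RHS]lognE (negPf pp).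
    by move: (h p pp); rewrite S => /eqP; rewrite subr_eq0 eqz_nat => /eqP.
  by rewrite divff // pnatr_eq0 -lt0n.
Qed.
Local Close Scope ring_scope.
Local Open Scope ring_scope.

Definition Rel k (n : 'I_k -> nat) (c : 'I_k -> int) :=
  forall p, prime p -> \sum_j c j * (logn p (n j))%:Z = 0.

Lemma reduce_q q k (n : 'I_k -> nat) (c : 'I_k -> int) : prime q ->
  (exists j, c j != 0) -> Rel n c ->
  exists b : 'I_k -> int, Rel n b /\ exists j, ~~ (q %| b j)%Z.
Proof.
move=> hq.
move: {2}(\sum_j `|c j|)%N (leqnn (\sum_j `|c j|)%N) => m.
elim: m c => [|m IH] c hm [j0 cj0] hc.
  by move: hm; rewrite leqn0 (bigD1 j0) //= addn_eq0 absz_eq0 (negPf cj0).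
case: (boolP [exists j, ~~ (q %| c j)%Z]) => [/existsP ex|].
  by exists c; split.
rewrite negb_exists => /forallP hall.
have hd j : (q %| c j)%Z by move: (hall j); rewrite negbK.
pose b j := (c j %/ q)%Z.
have hcb j : c j = b j * q%:Z by rewrite /b divzK.
have hq0 : q%:Z != 0 by rewrite eqz_nat -lt0n prime_gt0.
apply: (IH b).
- have hb0 : (0 < \sum_j `|b j|)%N.
    rewrite (bigD1 j0) //= ltn_addr // absz_gt0.
    by apply: contraNneq cj0; rewrite hcb => ->; rewrite mul0r.
  have E : (\sum_j `|c j|)%N = (\sum_j `|b j| * q)%N.
    by apply: eq_bigr => j _; rewrite hcb abszM.
  rewrite -big_distrl /= in E.
  rewrite -ltnS; apply: leq_trans hm; rewrite E.
  by rewrite -{1}(muln1 (\sum_j _)%N) ltn_pmul2l // prime_gt1.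
- exists j0; apply: contraNneq cj0; rewrite hcb => ->; by rewrite mul0r.
- move=> p pp; move: (hc p pp).
  under eq_bigr do rewrite hcb mulrAC.
  by rewrite -mulr_suml => /eqP; rewrite mulf_eq0 (negPf hq0) orbF => /eqP.
Qed.

Lemma Fq_intr_eq0 q (hq : prime q) (z : int) : (z%:~R == 0 :> 'F_q) = (q %| z)%Z.
Proof. by rewrite (dvdz_pcharf (pchar_Fp hq)). Qed.

Lemma partA q (hq : prime q) k (n : 'I_k -> nat) :
  (forall j, (0 < n j < q)%N) -> mult_dep n -> Fq_dep q n.
Proof.
move=> hn [a [nz ha]].
have hn0 j : (0 < n j)%N by case/andP: (hn j).
have Ra : Rel n a by move: ha; rewrite prodQ_eq1.
have [b [Rb [j0 hj0]]] := reduce_q hq nz Ra.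
exists (fun j => (b j)%:~R); split.
  by exists j0; rewrite Fq_intr_eq0.
move=> v; rewrite /Lform.
under eq_bigr do rewrite mulr_sumr.
rewrite exchange_big /=; apply: big1 => i _.
have [pp _] := pr_prime (ltn_ord i).
have := Rb _ pp => /(congr1 (fun z : int => z%:~R : 'F_q)).
rewrite rmorph0 rmorph_sum /= => hs.
rewrite -[RHS](mul0r (v ord0 i)) -[in RHS]hs mulr_suml; apply: eq_bigr => j _.
by rewrite rmorphM /= mulrA.
Qed.
Local Open Scope ring_scope.
Lemma det_bound k (A : 'M[int]_k) (B : nat) :
  (forall j l, `|A j l| <= B)%N -> (`|\det A| <= k`! * B ^ k)%N.
Proof.
move=> hA; rewrite -lez_nat abszE /determinant.
apply: le_trans (ler_norm_sum _ _ _) _.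
rewrite PoszM -card_Sn -sum1_card (big_morph Posz PoszD (erefl _)) mulr_suml.
apply: ler_sum => s _; rewrite mul1r normrM normrX normrN1 expr1n mul1r.
rewrite normr_prod -natz natrX natz -[k in _ ^+ k]card_ord -prodr_const; apply: ler_prod => i _.
by rewrite normr_ge0 /= -abszE lez_nat.
Qed.
Local Close Scope ring_scope.
Local Open Scope ring_scope.

Lemma Lform_delta q n (i : 'I_(dq q)) :
  @Lform q n (\row_l ((l == i)%:R)) = (logn (pr q i) n)%:R.
Proof.
rewrite /Lform (bigD1 i) //= mxE eqxx mulr1 big1 ?addr0 // => l hl.
by rewrite mxE (negPf hl) mulr0.
Qed.

Lemma logn_big p m : (0 < m)%N -> (m < p)%N -> logn p m = 0%N.
Proof.
move=> m0 mp; apply/eqP; rewrite -leqn0 leqNgt logn_gt0 mem_primes.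
apply/negP => /and3P[_ _ /(dvdn_leq m0)]; rewrite leqNgt mp.
by [].
Qed.

Lemma partB q (hq : prime q) k (n : 'I_k -> nat) :
  (forall j, (0 < n j < q)%N) ->
  (k`! * (trunc_log 2 q * trunc_log 2 q) ^ k < q)%N ->
  Fq_dep q n -> mult_dep n.
Proof.
move=> hn hb [a [[j0 aj0] ha]].
have hn0 j : (0 < n j)%N by case/andP: (hn j).
pose d := dq q.
pose mu (j : 'I_k) (i : 'I_d) := logn (pr q i) (n j).
pose L := trunc_log 2 q.
have hOm j : (\sum_i mu j i <= L)%N.
  apply: trunc_log_max => //; apply: leq_trans (Omega_le (hn0 j) _) _.
    by case/andP: (hn j).
  by apply: ltnW; case/andP: (hn j).
pose G : 'M[int]_k := \matrix_(j, l) (\sum_i mu j i * mu l i)%N%:Z.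
have hGb j l : (`|G j l| <= L * L)%N.
  rewrite mxE absz_nat.
  apply: (@leq_trans ((\sum_i mu j i) * (\sum_i mu l i))%N); last first.
    by apply: leq_mul.
  rewrite big_distrl /=; apply: leq_sum => i _; rewrite leq_mul2l.
  by apply/orP; right; rewrite (bigD1 i) //= leq_addr.
have hdet : \det G = 0.
  have hmu i : \sum_j a j * (mu j i)%:R = 0 :> 'F_q.
    by rewrite -[RHS](ha (\row_l ((l == i)%:R))); apply: eq_bigr => j _; rewrite Lform_delta.
  have hz : (\row_j a j) *m map_mx (intr : int -> 'F_q) G = 0.
    apply/rowP => l; rewrite !mxE.
    under eq_bigr do rewrite !mxE (big_morph Posz PoszD (erefl _)) rmorph_sum mulr_sumr.
    rewrite exchange_big /=; apply: big1 => i _.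
    rewrite -[RHS](mulr0 (mu l i)%:R) -[in RHS](hmu i) mulr_sumr; apply: eq_bigr => j _.
    have e (m : nat) : (Posz m)%:~R = m%:R :> 'F_q by [].
    by rewrite PoszM rmorphM /= !e [RHS]mulrCA [(mu l i)%:R * _]mulrC.
  have : \det (map_mx (intr : int -> 'F_q) G) == 0.
    apply/det0P; exists (\row_j a j) => //.
    by apply/eqP => /rowP /(_ j0); rewrite !mxE => /eqP; rewrite (negPf aj0).
  rewrite det_map_mx /= Fq_intr_eq0 // dvdzE => hd.
  apply/eqP; rewrite -absz_eq0; apply/eqP.
  have := det_bound hGb => hle.
  case E : `|\det G|%N => [//|m]; move: hd hle; rewrite E => /(dvdn_leq (ltn0Sn m)) h1 h2.
  by move: (leq_ltn_trans (leq_trans h1 h2) hb); rewrite ltnn.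
have e (m : nat) : (Posz m)%:~R = m%:R :> rat by [].
have [x x0 xG] : exists2 x : 'rV[rat]_k, x != 0 & x *m map_mx (intr : int -> rat) G = 0.
  by apply/det0P; rewrite det_map_mx hdet rmorph0.
pose M : 'M[rat]_(k, d) := \matrix_(j, i) (mu j i)%:R.
have GM : map_mx (intr : int -> rat) G = M *m M^T.
  apply/matrixP => j l; rewrite !mxE (big_morph Posz PoszD (erefl _)) rmorph_sum.
  by apply: eq_bigr => i _; rewrite !mxE PoszM rmorphM /= !e.
pose y := x *m M.
have yy : (y *m y^T) 0 0 = 0.
  by rewrite /y trmx_mul !mulmxA -(mulmxA x M) -GM xG mul0mx mxE.
have hy i : \sum_j x 0 j * (mu j i)%:R = 0.
  have : y 0 i = 0.
    move: yy; rewrite {1}mxE.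
    under eq_bigr do rewrite [y^T _ _]mxE -expr2.
    move/(psumr_eq0P (fun i _ => sqr_ge0 (y 0 i))) => /(_ i isT) /eqP.
    by rewrite sqrf_eq0 => /eqP.
  by rewrite /y mxE; under eq_bigr do rewrite mxE.
have [j1 xj1] : exists j, x 0 j != 0.
  case: (boolP [exists j, x 0 j != 0]) => [/existsP //|].
  rewrite negb_exists => /forallP hx; case/eqP: x0; apply/rowP => j.
  by move: (hx j); rewrite negbK mxE => /eqP.
pose D := \prod_l denq (x 0 l).
pose c j := numq (x 0 j) * \prod_(l | l != j) denq (x 0 l).
have hc j : (c j)%:~R = x 0 j * D%:~R :> rat.
  by rewrite /c /D [in RHS](bigD1 j) //= !rmorphM /= mulrA -numqE.
have hD : D%:~R != 0 :> rat.
  rewrite intr_eq0 /D; apply/prodf_neq0 => l _; exact: denq_neq0.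
exists c; split.
  exists j1; apply: contraNneq xj1 => hcj.
  by move: (hc j1); rewrite hcj mulr0z => /esym/eqP; rewrite mulf_eq0 (negPf hD) orbF.
apply/prodQ_eq1 => // p pp.
case: (ltnP p q) => hpq; last first.
  apply: big1 => j _; rewrite logn_big ?mulr0 //.
  by apply: leq_trans hpq; case/andP: (hn j).
have [i hi hpi] := pr_index pp hpq.
apply/eqP; rewrite -(intr_eq0 rat) rmorph_sum /=.
rewrite (eq_bigr (fun j => x 0 j * (mu j (Ordinal hi))%:R * D%:~R)).
  by rewrite -mulr_suml hy mul0r.
move=> j _; rewrite rmorphM /= hc e /mu /= hpi.
by rewrite mulrAC.
Qed.
Local Close Scope ring_scope.
Lemma fact_le_pow n : (n`! <= n ^ n)%N.
Proof.
elim: n => // n IH; rewrite factS expnS leq_mul2l; apply/orP; right.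
apply: leq_trans IH _; case: n => // n; by rewrite leq_exp2r.
Qed.

Definition bnd k q := (k`! * (trunc_log 2 q * trunc_log 2 q) ^ k < q)%N.

Section RealB.
Import Reals Lra.
Local Open Scope R_scope.

Lemma INR_expn (m n : nat) : INR (expn m n) = INR m ^ n.
Proof.
elim: n => [|n IH]; first by rewrite expn0.
by rewrite expnS -multE mult_INR IH.
Qed.

Lemma ln_le' a b : 0 < a -> a <= b -> ln a <= ln b.
Proof.
move=> ha hab; case: (Req_dec a b) => [->|hne]; first by right.
by left; apply: ln_increasing => //; lra.
Qed.

Lemma bound_real k q : prime q -> small_k k q -> bnd k q.
Proof.
move=> hq; rewrite /bnd; case: k => [|k'] hs; first by rewrite fact0 expn0 mul1n prime_gt1.
set k := k'.+1 in hs *.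
set L := trunc_log 2 q.
have hL : leq (expn 2 L) q by apply: trunc_logP => //; apply: prime_gt0.
apply: (@leq_ltn_trans (expn (muln k (muln L L)) k)).
  by rewrite (expnMn k (L * L) k) leq_mul2r fact_le_pow orbT.
apply/ssrnat.ltP; apply: INR_lt.
have q0 : 0 < INR q by apply: lt_0_INR; apply/ssrnat.ltP; apply: prime_gt0.
have k1 : 1 <= INR k by rewrite /k S_INR; have := pos_INR k'; lra.
set x := ln (INR q).
have hLog2 : 2 <= Log2 (INR q) by rewrite /Log2 /Log; apply: Rmax_r.
have hs' : INR k * (10 * Log2 (INR q)) < Log (INR q).
  have hp : 0 < 10 * Log2 (INR q) by lra.
  move: hs; rewrite /small_k => hs.
  have := Rmult_lt_compat_r _ _ _ hp hs.
  by rewrite /Rdiv Rmult_assoc Rinv_l ?Rmult_1_r //; lra.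
have hx20 : 20 < x.
  have h20 : 20 < Log (INR q) by nra.
  move: h20; rewrite /Log /Rmax; case: (Rle_dec (ln (INR q)) 2) => //; lra.
have hLogx : Log (INR q) = x.
  by rewrite /Log /Rmax -/x; case: (Rle_dec x 2) => //; lra.
have hlnx : ln x <= Log2 (INR q) by rewrite /Log2 hLogx /Log; apply: Rmax_l.
have lnx1 : 1 <= ln x.
  rewrite -[1](ln_exp 1); apply: ln_le'; first exact: exp_pos.
  have := exp_le_3; lra.
have hk : INR k * (10 * ln x) < x.
  have := hs'; rewrite hLogx => hs2; apply: Rle_lt_trans hs2.
  apply: Rmult_le_compat_l; [lra | lra].
have kx : INR k <= x by nra.
have Lx : INR L <= 2 * x.
  have h1 : 2 ^ L <= INR q.
    have e2 : INR 2 = 2 by simpl; lra.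
    rewrite -e2.
    by rewrite -INR_expn; apply: le_INR; apply/ssrnat.leP.
  have h2 : INR L * ln 2 <= x.
    rewrite /x -ln_pow; last lra.
    apply: ln_le' => //; apply: pow_lt; lra.
  have := ln_lt_2; have := pos_INR L; nra.
have x0 : 0 < x by lra.
rewrite INR_expn !mult_INR.
apply: (@Rle_lt_trans _ ((x ^ 4) ^ k)).
  apply: pow_incr; split.
    by apply: Rmult_le_pos; [apply: pos_INR | apply: Rmult_le_pos; apply: pos_INR].
  have hL0 := pos_INR L.
  have : INR L * INR L <= 2 * x * (2 * x) by apply: Rmult_le_compat; lra.
  move=> hLL.
  have : INR k * (INR L * INR L) <= x * (2 * x * (2 * x)).
    apply: Rmult_le_compat => //; [apply: pos_INR | nra].
  have : x * (2 * x * (2 * x)) <= x ^ 4 by rewrite /pow; nra.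
  lra.
rewrite -pow_mult -Rpower_pow // /Rpower mult_INR.
rewrite -[INR q](exp_ln _ q0); apply: exp_increasing.
rewrite -/x; have e4 : INR 4 = 4 by simpl; lra.
rewrite e4.
have : 0 <= INR k * ln x by nra.
nra.
Qed.
End RealB.

Theorem lemma3p2 (q : nat) (hq : prime q) (k : nat) :
  (forall n : 'I_k -> nat,
     (forall j, 0 < n j < q) -> mult_dep n -> Fq_dep q n) /\
  (small_k k q ->
   forall n : 'I_k -> nat,
     (forall j, 1 < n j < q) -> (mult_indep n <-> Fq_indep q n)).
Proof.
split.
  by move=> n hn; apply: partA.
move=> hs n hn.
have hn' j : 0 < n j < q by case/andP: (hn j) => h1 ->; rewrite andbT ltnW.
split.
  move=> hmi hdep; apply: hmi; exact: (partB hq hn' (bound_real hq hs) hdep).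
by move=> hfi hmd; apply: hfi; exact: partA.
Qed.
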